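(* Let $n>3$. Let $U_{2,2}$ be the irreducible $SL_n$-subrepresentation of the space of polynomial functions on $\mathfrak{sl}_n$ generated by the $2\times2$ minor $Z\mapsto Z_{1,n}Z_{2,n-1}-Z_{1,n-1}Z_{2,n}$. Then for every $f\in U_{2,2}$ and every $Z\in\overline{\mathbb{S}_{\mathrm{min}}(\mathfrak{sl}_n)}$ we have $f(Z)=0$.
   Context: $SL_n$ acts on functions on $\mathfrak{sl}_n$ via the adjoint action; the span of all $2\times2$ minors $Z_{i,j}Z_{k,l}-Z_{i,l}Z_{k,j}$ is an $SL_n$-representation isomorphic to $\wedge^2E^*\otimes\wedge^2E$ with $E=\mathbb{C}^n$, which decomposes as $V_{1,2}\oplus U_{2,2}$. The sheet closure is $$\overline{\mathbb{S}_{\mathrm{min}}(\mathfrak{sl}_n)}=\left\{R\begin{pmatrix}(n-1)Y_1 & Y_2&\cdots&Y_n\\ 0&-Y_1&&0\\ \vdots&&\ddots&\vdots\\ 0&\cdots&\cdots&-Y_1\end{pmatrix}R^{-1}\ \middle|\ Y_i\in\mathbb{C},\ R\in SL_n\right\},$$ the closure of the sheet of $\mathfrak{sl}_n$ containing the minimal nilpotent orbit. *)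

(* Defs.v *)
From HB Require Import structures.
From mathcomp Require Import all_boot all_order all_algebra.
From mathcomp Require Import complex.
From mathcomp Require Import reals.
Set Implicit Arguments. Unset Strict Implicit. Unset Printing Implicit Defensive.
Import GRing.Theory Num.Theory.
Local Open Scope ring_scope.

Section Defs.
Variable C : fieldType.

Definition in_sl (n : nat) (Z : 'M[C]_n) : Prop := \tr Z = 0.

Definition in_SL (n : nat) (g : 'M[C]_n) : Prop := \det g = 1.

(* The adjoint action of g on Z : g Z g^{-1}; functions are translated by
   (g . f)(Z) = f (g^{-1} Z g). *)
Definition Ad (n : nat) (g Z : 'M[C]_n) : 'M[C]_n := g *m Z *m invmx g.

(* The 2x2 minor  Z |-> Z_{1,n} Z_{2,n-1} - Z_{1,n-1} Z_{2,n}  (1-based indices),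
   for matrices of size m.+1 = n.  Index n (1-based) is m (0-based),
   index n-1 (1-based) is m-1 (0-based). *)
Definition minor_top (m : nat) (Z : 'M[C]_m.+1) : C :=
  Z (inord 0) (inord m) * Z (inord 1) (inord m.-1)
  - Z (inord 0) (inord m.-1) * Z (inord 1) (inord m).

(* U_{2,2}: the SL_n-subrepresentation of the polynomial functions on sl_n
   generated by minor_top, i.e. the linear span of the SL_n-translates
   Z |-> minor_top (g^{-1} Z g) of minor_top, as functions on sl_n. *)
Definition in_U22 (m : nat) (f : 'M[C]_m.+1 -> C) : Prop :=
  exists s : seq (C * 'M[C]_m.+1),
    (forall p, p \in s -> in_SL p.2) /\
    (forall Z, in_sl Z ->
       f Z = \sum_(p <- s) p.1 * minor_top (Ad (invmx p.2) Z)).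

(* The matrix  [[(n-1)Y_1, Y_2, ..., Y_n]; [0, -Y_1, 0, ..., 0]; ...; [0, ..., 0, -Y_1]]
   of size n = m.+1, with Y : 'I_n -> C, Y i = Y_{i+1} (0-based indexing). *)
Definition sheet_mx (m : nat) (Y : 'I_m.+1 -> C) : 'M[C]_m.+1 :=
  \matrix_(i < m.+1, j < m.+1)
    if i == ord0 then
      (if j == ord0 then m%:R * Y ord0 else Y j)
    else (if i == j then - Y ord0 else 0).

(* The closure of the sheet of sl_n containing the minimal nilpotent orbit,
   given (as in the paper) by  { R sheet_mx(Y) R^{-1} | Y in C^n, R in SL_n }. *)
Definition in_Smin_closure (m : nat) (Z : 'M[C]_m.+1) : Prop :=
  exists (Y : 'I_m.+1 -> C) (Rm : 'M[C]_m.+1),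
    in_SL Rm /\ Z = Rm *m sheet_mx Y *m invmx Rm.
End Defs.

(* Main.v *)
Require Import Defs.
From HB Require Import structures.
From mathcomp Require Import all_boot all_order all_algebra.
From mathcomp Require Import complex.
From mathcomp Require Import reals.
Set Implicit Arguments. Unset Strict Implicit.
Import GRing.Theory Num.Theory.
Local Open Scope ring_scope.
Local Open Scope complex_scope.

Section Aux.
Variable C : fieldType.

Definition cvec (m : nat) : 'cV[C]_m.+1 := \col_i (i == ord0)%:R.
Definition rvec (m : nat) (Y : 'I_m.+1 -> C) : 'rV[C]_m.+1 :=
  \row_j (if j == ord0 then m.+1%:R * Y ord0 else Y j).

Lemma sheet_decomp m (Y : 'I_m.+1 -> C) :
  sheet_mx Y = - (Y ord0)%:M + cvec m *m rvec Y.
Proof.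
apply/matrixP => i j; rewrite !mxE big_ord1 !mxE.
case: (eqVneq i ord0) => [Hi|ni]; case: (eqVneq j ord0) => [Hj|nj]; rewrite ?Hi ?Hj.
- by rewrite eqxx mulr1n mul1r -addn1 natrD mulrDl mul1r addrC addrK.
- by rewrite eq_sym (negbTE nj) mulr0n oppr0 add0r mul1r.
- by rewrite (negbTE ni) mulr0n oppr0 mul0r addr0.
- by rewrite mul0r addr0; case: (i == j); rewrite ?mulr1n ?mulr0n ?oppr0.
Qed.
Lemma conj_entry m (Y : 'I_m.+1 -> C) (A B : 'M[C]_m.+1) i j :
  A *m B = 1%:M -> i != j ->
  (A *m sheet_mx Y *m B) i j = (A *m cvec m) i 0 * (rvec Y *m B) 0 j.
Proof.
move=> AB ij.
rewrite sheet_decomp mulmxDr mulmxN mul_mx_scalar mulmxDl mulNmx -scalemxAl AB.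
have -> : A *m (cvec m *m rvec Y) *m B = (A *m cvec m) *m (rvec Y *m B).
  by rewrite !mulmxA.
rewrite !mxE (negbTE ij) mulr0n mulr0 oppr0 add0r big_ord1 !mxE.
reflexivity.
Qed.

Lemma tr_sheet m (Y : 'I_m.+1 -> C) : \tr (sheet_mx Y) = 0.
Proof.
rewrite sheet_decomp mxtraceD raddfN /= mxtrace_scalar mxtrace_mulC.
rewrite /mxtrace big_ord1 !mxE big_ord_recl !mxE eqxx mulr1 big1 ?addr0.
  by rewrite mulr_natl addrC subrr.
by move=> i _; rewrite [cvec _ _ _]mxE eq_sym (negbTE (neq_lift _ _)) mulr0.
Qed.
End Aux.

Theorem mainTheorem7 (R : realType) (k : nat)
    (f : 'M[R[i]]_k.+4 -> R[i]) :
  in_U22 f ->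
  forall Z : 'M[R[i]]_k.+4, in_Smin_closure Z -> f Z = 0.
Proof.
move=> [s [hs hf]] Z [Y [Rm [hR ->]]].
have uR : Rm \in unitmx by rewrite unitmxE /in_SL in hR *; rewrite hR unitr1.
rewrite hf; last first.
  by rewrite /in_sl mxtrace_mulC mulmxA mulVmx // mul1mx tr_sheet.
rewrite big_seq big1 // => p /hs hp.
have ug : p.2 \in unitmx by rewrite unitmxE /in_SL in hp *; rewrite hp unitr1.
rewrite /Ad invmxK.
set A := invmx p.2 *m Rm; set B := invmx Rm *m p.2.
have -> : invmx p.2 *m (Rm *m sheet_mx Y *m invmx Rm) *m p.2 = A *m sheet_mx Y *m B.
  by rewrite /A /B !mulmxA.
have AB : A *m B = 1%:M.
  by rewrite /A /B mulmxA -(mulmxA _ Rm) mulmxV // mulmx1 mulVmx.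
have ne : forall a b : nat, (a < k.+4)%N -> (b < k.+4)%N -> a != b ->
  (inord a : 'I_k.+4) != inord b.
  by move=> a b ha hb hab; rewrite -val_eqE /= !inordK.
rewrite /minor_top /= !conj_entry //; last 4 first.
- exact: ne.
- exact: ne.
- exact: ne.
- exact: ne.
set a0 := (A *m _) (inord 0) 0; set a1 := (A *m _) (inord 1) 0.
set b3 := (_ *m B) 0 (inord k.+3); set b2 := (_ *m B) 0 (inord k.+2).
by rewrite mulrACA [X in _ - X]mulrACA [b2 * _]mulrC subrr mulr0.
Qed.
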